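(* Let $0<\beta<\alpha<1$, let $\Pi:\{0,1\}^n\times\{0,1\}^n\to S$ be a subcube-like protocol of codimension $d=\mathrm{codim}(\Pi)$ with $d\le(\alpha-\beta)^2 r\Delta/4$, and let $G_1=([m],[n],E_1)$, $G_2=([m],[n],E_2)$ be two $(r,\Delta,\alpha\Delta)$-expanders. Then there exist families $\{\mathrm{Cl}^X(v)\}_{v\in\mathcal N(\Pi)}$ and $\{\mathrm{Cl}^Y(v)\}_{v\in\mathcal N(\Pi)}$ of subsets of $[m]$ such that: (1) for every non-root node $v$ with parent $u$, $\mathrm{Cl}^X(u)\subseteq\mathrm{Cl}^X(v)$ and $\mathrm{Cl}^Y(u)\subseteq\mathrm{Cl}^Y(v)$; (2) for every $v$, the graphs $G_1-\mathrm{Cl}^X(v)-N_{G_1}(\mathrm{Cl}^X(v))-\mathrm{fix}(X_v)$ and $G_2-\mathrm{Cl}^Y(v)-N_{G_2}(\mathrm{Cl}^Y(v))-\mathrm{fix}(Y_v)$ (vertex deletions on the left and right sides) are both $(r,\Delta,\beta\Delta)$-expanders; (3) for every $v$, $|\mathrm{Cl}^X(v)|,|\mathrm{Cl}^Y(v)|\le\frac{1}{\alpha-\beta}\cdot\frac{d}{\Delta}$.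
   Context: $\mathcal N(\Pi)$ is the set of nodes of the protocol tree of $\Pi$; node $v$ has rectangle $R_v=X_v\times Y_v$. A bipartite graph $G=(L,R,E)$ is an $(r,\Delta,\alpha\Delta)$-expander if every vertex of $L$ has degree at most $\Delta$ and every $S\subseteq L$ with $|S|\le r$ has $|N(S)|\ge\alpha\Delta|S|$. A random $\bm x\in\{0,1\}^n$ is $\gamma$-spread if $\mathbf H_\infty(\bm x_I)\ge\gamma|I|$ for all $I\subseteq[n]$; it is $(I,\gamma)$-structured if $\bm x_I$ is fixed with probability 1 and $\bm x_{[n]\setminus I}$ is $\gamma$-spread. A rectangle $X\times Y$ is subcube-like w.r.t. $(I,J)$ if uniform $\bm x\sim X$ is $(I,\gamma)$-structured and uniform $\bm y\sim Y$ is $(J,\gamma)$-structured (for some $\gamma>0$); $\mathrm{fix}(X)=I$, $\mathrm{fix}(Y)=J$, $\mathrm{codim}(X\times Y)=|I|+|J|$. A protocol is subcube-like if every node rectangle is; its codimension is the maximum over nodes. *)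

(* Defs.v *)
From mathcomp Require Import all_boot.
From Stdlib Require Import Reals.
Set Implicit Arguments. Unset Strict Implicit. Unset Printing Implicit Defensive.

Definition bv (n : nat) := {ffun 'I_n -> bool}.

(* Deterministic two-party protocol trees: Alice nodes branch on a bit
   computed from x, Bob nodes on a bit computed from y, leaves output in S. *)
Inductive protocol (n : nat) (S : Type) : Type :=
| PLeaf of S
| PAlice of (bv n -> bool) & protocol n S & protocol n S
| PBob of (bv n -> bool) & protocol n S & protocol n S.
Arguments PLeaf {n S}.
Arguments PAlice {n S}.
Arguments PBob {n S}.

(* Nodes of the protocol tree = paths from the root (list of bits, root first;
   the children of node p are rcons p false / rcons p true). *)
Fixpoint nodes n S (P : protocol n S) : seq (seq bool) :=
  match P with
  | PLeaf _ => [:: [::]]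
  | PAlice _ t0 t1 | PBob _ t0 t1 =>
      [::] :: map (cons false) (nodes t0) ++ map (cons true) (nodes t1)
  end.

Fixpoint rectX n S (P : protocol n S) (p : seq bool) : {set bv n} :=
  match P, p with
  | PAlice f t0 t1, b :: q => [set x | f x == b] :&: rectX (if b then t1 else t0) q
  | PBob _ t0 t1, b :: q => rectX (if b then t1 else t0) q
  | _, _ => setT
  end.

Fixpoint rectY n S (P : protocol n S) (p : seq bool) : {set bv n} :=
  match P, p with
  | PAlice _ t0 t1, b :: q => rectY (if b then t1 else t0) q
  | PBob g t0 t1, b :: q => [set y | g y == b] :&: rectY (if b then t1 else t0) q
  | _, _ => setT
  end.

Definition log2 (x : R) : R := (ln x / ln 2)%R.

Definition agree n (I : {set 'I_n}) (x x0 : bv n) : bool :=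
  [forall i in I, x i == x0 i].

(* min-entropy of x_I for x uniform on X :  -log2 max_a Pr[x_I = a]
   (the max over values a realised by X; other values have probability 0). *)
Definition maxprob n (X : {set bv n}) (I : {set 'I_n}) : R :=
  (INR (\max_(x0 in X) #|[set x in X | agree I x x0]|) / INR #|X|)%R.

Definition Hinf n (X : {set bv n}) (I : {set 'I_n}) : R :=
  (- log2 (maxprob X I))%R.

Definition structured n (X : {set bv n}) (I : {set 'I_n}) (gamma : R) : Prop :=
  X != set0 /\
  (forall x y, x \in X -> y \in X -> agree I x y) /\
  (forall I' : {set 'I_n}, I' \subset ~: I ->
     (gamma * INR #|I'| <= Hinf X I')%R).

Definition subcube_like_wrt n (X Y : {set bv n}) (I J : {set 'I_n}) : Prop :=
  exists gamma : R, (0 < gamma)%R /\ structured X I gamma /\ structured Y J gamma.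

Definition subcube_like n (X Y : {set bv n}) : Prop :=
  exists I J, subcube_like_wrt X Y I J.

(* fix(X): the set of coordinates fixed on X (equals I when X is
   (I,gamma)-structured). *)
Definition fixcoords n (X : {set bv n}) : {set 'I_n} :=
  [set i | [forall x in X, forall y in X, x i == y i]].

Definition subcube_like_protocol n S (P : protocol n S) : Prop :=
  forall p, p \in nodes P -> subcube_like (rectX P p) (rectY P p).

Definition codim_node n (X Y : {set bv n}) : nat := #|fixcoords X| + #|fixcoords Y|.

Definition codim n S (P : protocol n S) : nat :=
  \max_(p <- nodes P) codim_node (rectX P p) (rectY P p).

Definition nbr m n (E : 'I_m -> 'I_n -> bool) (A : {set 'I_m}) : {set 'I_n} :=
  [set j | [exists i in A, E i j]].

Definition expander m n (L : {set 'I_m}) (Rt : {set 'I_n})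
    (E : 'I_m -> 'I_n -> bool) (r Delta : nat) (c : R) : Prop :=
  (forall i, i \in L -> #|[set j in Rt | E i j]| <= Delta) /\
  (forall Sv : {set 'I_m}, Sv \subset L -> #|Sv| <= r ->
     (c * INR #|Sv| <= INR #|Rt :&: nbr E Sv|)%R).

Definition expander_del m n (E : 'I_m -> 'I_n -> bool) (A : {set 'I_m})
    (B C : {set 'I_n}) (r Delta : nat) (c : R) : Prop :=
  expander (~: A) (~: (B :|: C)) E r Delta c.

(* Main.v *)
Require Import Defs.
From mathcomp Require Import all_boot.
From Stdlib Require Import Reals Lra Psatz.
Set Implicit Arguments. Unset Strict Implicit. Unset Printing Implicit Defensive.


Definition Rleb (x y : R) : bool := if Rle_dec x y then true else false.
Lemma RlebP x y : reflect (x <= y)%R (Rleb x y).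
Proof. rewrite /Rleb; case: Rle_dec => h; constructor => //. Qed.

Definition goodb m n (E : 'I_m -> 'I_n -> bool) (beta Kb : R) (Delta : nat)
  (J : {set 'I_n}) (C : {set 'I_m}) : bool :=
  Rleb (INR #|~: J :&: nbr E C|) (beta * INR Delta * INR #|C|) && Rleb (INR #|C|) Kb.

Lemma nbrU m n (E : 'I_m -> 'I_n -> bool) A B : nbr E (A :|: B) = nbr E A :|: nbr E B.
Proof.
apply/setP => j; rewrite !inE; apply/existsP/orP.
- case=> i /andP[]; rewrite inE => /orP[] Hi Hj.
  + by left; apply/existsP; exists i; rewrite Hi.
  + by right; apply/existsP; exists i; rewrite Hi.
- case=> /existsP[i /andP[Hi Hj]]; exists i; by rewrite inE Hi ?orbT.
Qed.

Lemma nbr0 m n (E : 'I_m -> 'I_n -> bool) : nbr E set0 = set0.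
Proof. by apply/setP => j; rewrite !inE; apply/existsP => -[i]; rewrite inE. Qed.

Lemma INR_leb a b : a <= b -> (INR a <= INR b)%R.
Proof. by move/leP; apply: le_INR. Qed.

Lemma step m n (E : 'I_m -> 'I_n -> bool) (alpha beta : R) (r Delta d : nat)
  (J : {set 'I_n}) (C S : {set 'I_m}) :
  (0 < beta)%R -> (beta < alpha)%R -> (alpha < 1)%R ->
  (INR d <= (alpha - beta) ^ 2 * INR r * INR Delta / 4)%R ->
  (forall Sv : {set 'I_m}, #|Sv| <= r ->
     (alpha * INR Delta * INR #|Sv| <= INR #|[set: 'I_n] :&: nbr E Sv|)%R) ->
  #|J| <= d ->
  goodb E beta (/ (alpha - beta) * (INR d / INR Delta))%R Delta J C ->
  S \subset ~: C -> #|S| <= r ->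
  (INR #|~: (nbr E C :|: J) :&: nbr E S| < beta * INR Delta * INR #|S|)%R ->
  goodb E beta (/ (alpha - beta) * (INR d / INR Delta))%R Delta J (C :|: S).
Proof.
move=> hb hba ha1 hd hexp hJ /andP[/RlebP H1 /RlebP H2] hSC hSr H3.
set K := (/ (alpha - beta) * (INR d / INR Delta))%R in H2 *.
set A := nbr E C in H1 H3 *.
set B := nbr E S in H3 *.
set a := INR #|~: J :&: A| in H1.
set b := INR #|~: (A :|: J) :&: B| in H3.
set c := INR #|C| in H1 H2.
set s := INR #|S| in H3.
have hDS : (0 < INR Delta)%R.
  case: (posnP Delta) => [hD0|hDpos]; last by apply: lt_0_INR; apply/ltP.
  have : (0 <= b)%R by apply: pos_INR.
  rewrite hD0 /= in H3; lra.
have hdisj : [disjoint C & S].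
  by rewrite disjoint_sym disjoints_subset.
have cardCS : #|C :|: S| = #|C| + #|S|.
  rewrite cardsU (_ : C :&: S = set0) ?cards0 ?subn0 //; apply/setP => x.
  rewrite !inE; move/subsetP: hSC => /(_ x); rewrite inE.
  by case: (x \in C); case: (x \in S) => // /(_ isT).
have hNCS : nbr E (C :|: S) = A :|: B by rewrite nbrU.
have hsplit : #|~: J :&: (A :|: B)| = #|~: J :&: A| + #|~: (A :|: J) :&: B|.
  rewrite (_ : ~: J :&: (A :|: B) = (~: J :&: A) :|: (~: (A :|: J) :&: B)).
    rewrite cardsU (_ : (~: J :&: A) :&: (~: (A :|: J) :&: B) = set0) ?cards0 ?subn0 //.
    by apply/setP => x; rewrite !(in_setI, in_setU, in_setC, in_set0); case: (x \in A); case: (x \in J).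
  apply/setP => x; rewrite !(in_setI, in_setU, in_setC).
  by case: (x \in A); case: (x \in J); case: (x \in B).
have hB : #|B| = #|~: (A :|: J) :&: B| + #|(A :|: J) :&: B|.
  rewrite -(cardsID (A :|: J) B) addnC; congr (_ + _); last by rewrite setIC.
  by rewrite setDE setIC.
have hu : #|(A :|: J) :&: B| <= #|~: J :&: A| + #|J|.
  apply: leq_trans (subset_leq_card (subsetIl _ _)) _.
  rewrite (_ : A :|: J = (~: J :&: A) :|: J); first by apply: leq_card_setU.
  by apply/setP => x; rewrite !(in_setI, in_setU, in_setC); case: (x \in A); case: (x \in J).
have hNall : #|A :|: B| <= #|~: J :&: (A :|: B)| + #|J|.
  apply: leq_trans (leq_card_setU _ _).
  by apply: subset_leq_card; apply/subsetP => x; rewrite !(in_setI, in_setU, in_setC); case: (x \in J); case: (_ || _).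
have hexpS := hexp S hSr; rewrite setTI -/B in hexpS.
rewrite hB plus_INR -/b in hexpS.
have hu' := INR_leb hu; rewrite plus_INR -/a in hu'.
have hJ' := INR_leb hJ.
set u := INR #|(A :|: J) :&: B| in hexpS hu'.
set D := INR Delta in hDS H1 H3 hexpS hd.
set j := INR #|J| in hu' hJ'.
set e := (alpha - beta)%R in hd.
have he : (0 < e)%R by rewrite /e; lra.
have hKD : (e * D * K = INR d)%R by rewrite /K /D /e; field; rewrite -/D; lra.
have hc0 : (0 <= c)%R by apply: pos_INR.
have hs0 : (0 <= s)%R by apply: pos_INR.
have hKr : (K <= e * INR r / 4)%R.
  apply: (Rmult_le_reg_l (e * D)); first by nra.
  rewrite hKD; nra.
have heq : e = (alpha - beta)%R by [].
have hbD : (0 <= beta * D)%R by nra.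
have hcK : (beta * D * c <= beta * D * K)%R by apply: Rmult_le_compat_l.
have hs1 : (e * s < alpha * K)%R.
  apply: (Rmult_lt_reg_l D) => //.
  have -> : (D * (e * s) = alpha * D * s - beta * D * s)%R by rewrite heq; ring.
  have -> : (D * (alpha * K) = beta * D * K + e * D * K)%R by rewrite heq; ring.
  rewrite -/s in hexpS. lra.
have hr0 : (0 <= INR r)%R by apply: pos_INR.
have hsr : (s <= alpha * INR r / 4)%R.
  apply: (Rmult_le_reg_l e) => //.
  have : (alpha * K <= alpha * (e * INR r / 4))%R by apply: Rmult_le_compat_l; lra.
  have : (alpha * e * INR r <= e * INR r)%R by nra.
  lra.
have hcsr : #|C :|: S| <= r.
  rewrite cardCS; apply/leP; apply: INR_le; rewrite plus_INR -/c -/s. nra.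
have hexpCS := hexp _ hcsr; rewrite setTI hNCS cardCS plus_INR -/c -/s in hexpCS.
have hN := INR_leb hNall; rewrite hsplit !plus_INR -/a -/b -/j in hN.
apply/andP; split; apply/RlebP.
- rewrite hNCS hsplit plus_INR -/a -/b cardCS plus_INR -/c -/s.
  have -> : (beta * D * (c + s) = beta * D * c + beta * D * s)%R by ring.
  lra.
- rewrite cardCS plus_INR -/c -/s.
  apply: (Rmult_le_reg_l (e * D)); first by nra.
  rewrite hKD -/D in hexpCS *.
  have -> : (e * D * (c + s) = alpha * D * (c + s) - beta * D * c - beta * D * s)%R by rewrite heq; ring.
  lra.
Qed.

Definition ext m n (E : 'I_m -> 'I_n -> bool) (beta Kb : R) (Delta : nat)
  (J : {set 'I_n}) (C0 : {set 'I_m}) : {set 'I_m} :=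
  if goodb E beta Kb Delta J C0 then
    [arg max_(C > C0 | (C0 \subset C) && goodb E beta Kb Delta J C) #|C|]
  else C0.

Lemma ext_spec m n (E : 'I_m -> 'I_n -> bool) beta Kb Delta J (C0 : {set 'I_m}) :
  goodb E beta Kb Delta J C0 ->
  C0 \subset ext E beta Kb Delta J C0 /\ goodb E beta Kb Delta J (ext E beta Kb Delta J C0) /\
  (forall C' : {set 'I_m}, C0 \subset C' -> goodb E beta Kb Delta J C' ->
     #|C'| <= #|ext E beta Kb Delta J C0|).
Proof.
move=> hg; rewrite /ext hg.
case: arg_maxnP => [|C /andP[h1 h2] hmax]; first by rewrite subxx hg.
split=> //; split=> // C' h1' h2'; apply: hmax; by rewrite h1'.
Qed.

Lemma ext_sub m n (E : 'I_m -> 'I_n -> bool) beta Kb Delta J (C0 : {set 'I_m}) :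
  C0 \subset ext E beta Kb Delta J C0.
Proof.
case hg: (goodb E beta Kb Delta J C0); first by case: (ext_spec hg).
by rewrite /ext hg.
Qed.

Fixpoint clrev m n (E : 'I_m -> 'I_n -> bool) (beta Kb : R) (Delta : nat)
  (J : seq bool -> {set 'I_n}) (l : seq bool) : {set 'I_m} :=
  match l with
  | [::] => ext E beta Kb Delta (J [::]) set0
  | b :: l' => ext E beta Kb Delta (J (rev l)) (clrev E beta Kb Delta J l')
  end.

Lemma clrev_rcons m n (E : 'I_m -> 'I_n -> bool) beta Kb Delta J p b :
  clrev E beta Kb Delta J (rev (rcons p b)) =
  ext E beta Kb Delta (J (rcons p b)) (clrev E beta Kb Delta J (rev p)).
Proof. by rewrite rev_rcons /= rev_cons revK. Qed.

Lemma good_monoJ m n (E : 'I_m -> 'I_n -> bool) beta Kb Delta (J J' : {set 'I_n}) (C : {set 'I_m}) :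
  J \subset J' -> goodb E beta Kb Delta J C -> goodb E beta Kb Delta J' C.
Proof.
move=> hJ /andP[/RlebP h1 h2]; apply/andP; split=> //; apply/RlebP.
apply: Rle_trans h1; apply: INR_leb; apply: subset_leq_card.
by apply: setSI; rewrite setCS.
Qed.

Lemma card_disjU m (C S : {set 'I_m}) : S \subset ~: C -> #|C :|: S| = #|C| + #|S|.
Proof.
move=> hSC; rewrite cardsU (_ : C :&: S = set0) ?cards0 ?subn0 //; apply/setP => x.
rewrite !inE; move/subsetP: hSC => /(_ x); rewrite inE.
by case: (x \in C); case: (x \in S) => // /(_ isT).
Qed.

Lemma cl_props m n (E : 'I_m -> 'I_n -> bool) (alpha beta : R) (r Delta d : nat)
  (ns : seq (seq bool)) (J : seq bool -> {set 'I_n}) :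
  (0 < beta)%R -> (beta < alpha)%R -> (alpha < 1)%R ->
  (INR d <= (alpha - beta) ^ 2 * INR r * INR Delta / 4)%R ->
  expander [set: 'I_m] [set: 'I_n] E r Delta (alpha * INR Delta)%R ->
  [::] \in ns -> (forall p b, rcons p b \in ns -> p \in ns) ->
  (forall p b, J p \subset J (rcons p b)) -> (forall p, p \in ns -> #|J p| <= d) ->
  (forall p b, clrev E beta (/ (alpha - beta) * (INR d / INR Delta))%R Delta J (rev p)
     \subset clrev E beta (/ (alpha - beta) * (INR d / INR Delta))%R Delta J (rev (rcons p b))) /\
  (forall p, p \in ns ->
     expander_del E (clrev E beta (/ (alpha - beta) * (INR d / INR Delta))%R Delta J (rev p))
       (nbr E (clrev E beta (/ (alpha - beta) * (INR d / INR Delta))%R Delta J (rev p))) (J p)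
       r Delta (beta * INR Delta)%R /\
     (INR #|clrev E beta (/ (alpha - beta) * (INR d / INR Delta))%R Delta J (rev p)|
        <= / (alpha - beta) * (INR d / INR Delta))%R).
Proof.
move=> hb hba ha1 hd [hdeg hexp] hnil hpre hJ hJd.
set Kb := (/ (alpha - beta) * (INR d / INR Delta))%R.
have hKb : (0 <= Kb)%R.
  rewrite /Kb; apply: Rmult_le_pos; first by apply: Rlt_le; apply: Rinv_0_lt_compat; lra.
  case: (posnP Delta) => [->|hD]; first by rewrite /Rdiv (_ : INR 0 = 0%R) // Rinv_0; lra.
  apply: Rmult_le_pos; first by apply: pos_INR.
  by apply: Rlt_le; apply: Rinv_0_lt_compat; apply: lt_0_INR; apply/ltP.
set Cl := fun p => clrev E beta Kb Delta J (rev p).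
have hexp' : forall Sv : {set 'I_m}, #|Sv| <= r ->
     (alpha * INR Delta * INR #|Sv| <= INR #|[set: 'I_n] :&: nbr E Sv|)%R.
  by move=> Sv; apply: hexp; apply: subsetT.
have key : forall p, p \in ns ->
   exists C0, goodb E beta Kb Delta (J p) C0 /\ Cl p = ext E beta Kb Delta (J p) C0.
  elim/last_ind => [_|q b IH hqb].
    exists set0; split=> //; apply/andP; split; apply/RlebP; last by rewrite cards0.
    by rewrite nbr0 setI0 !cards0 /= Rmult_0_r; lra.
  have [C0 [hg0 hq]] := IH (hpre _ _ hqb).
  have [_ [hg1 _]] := ext_spec hg0.
  exists (Cl q); split; last by rewrite /Cl clrev_rcons.
  rewrite hq; exact: good_monoJ (hJ q b) hg1.
split; first by move=> p b; rewrite clrev_rcons; apply: ext_sub.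
move=> p hp.
have [C0 [hg0 hCl]] := key p hp.
have [hsub [hg hmax]] := ext_spec hg0.
rewrite -hCl in hsub hg hmax.
split; last by case/andP: hg => _ /RlebP.
split.
  move=> i _; apply: leq_trans (hdeg i (in_setT i)).
  by apply: subset_leq_card; apply/subsetP => j; rewrite !inE => /andP[_ ->]; rewrite andbT.
move=> Sv hSv hSvr.
case: (Rle_lt_dec (beta * INR Delta * INR #|Sv|)
        (INR #|~: (nbr E (Cl p) :|: J p) :&: nbr E Sv|)) => // hlt.
exfalso.
have hg2 := step hb hba ha1 hd hexp' (hJd p hp) hg hSv hSvr hlt.
have := hmax _ (subset_trans hsub (subsetUl (Cl p) Sv)) hg2.
rewrite card_disjU // -{2}(addn0 #|Cl p|) leq_add2l leqn0 => /eqP h0.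
move: hlt; rewrite h0 (_ : INR 0 = 0%R) // Rmult_0_r => hlt.
have := pos_INR #|~: (nbr E (Cl p) :|: J p) :&: nbr E Sv|; lra.
Qed.

Lemma nodes_nil n S (P : protocol n S) : [::] \in nodes P.
Proof. by case: P => * /=; rewrite inE eqxx. Qed.

Lemma nodes_prefix n S (P : protocol n S) p b : rcons p b \in nodes P -> p \in nodes P.
Proof.
elim: P p => [s|f t0 IH0 t1 IH1|f t0 IH0 t1 IH1] p.
- by case: p.
- case: p => [|c q]; first by move=> _; exact: mem_head.
  rewrite inE mem_cat => /orP[//|/orP[]] /mapP[x hx [hc hq]]; subst c;
  rewrite inE mem_cat; apply/orP; right; apply/orP; [left|right]; apply: map_f;
  [apply: IH0|apply: IH1]; by rewrite hq.
- case: p => [|c q]; first by move=> _; exact: mem_head.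
  rewrite inE mem_cat => /orP[//|/orP[]] /mapP[x hx [hc hq]]; subst c;
  rewrite inE mem_cat; apply/orP; right; apply/orP; [left|right]; apply: map_f;
  [apply: IH0|apply: IH1]; by rewrite hq.
Qed.

Lemma rectX_mono n S (P : protocol n S) p b : rectX P (rcons p b) \subset rectX P p.
Proof.
elim: P p => [s|f t0 IH0 t1 IH1|f t0 IH0 t1 IH1] [|c q] //=; rewrite ?subsetT //.
- by apply: setIS; case: c.
- by case: c.
Qed.

Lemma rectY_mono n S (P : protocol n S) p b : rectY P (rcons p b) \subset rectY P p.
Proof.
elim: P p => [s|f t0 IH0 t1 IH1|f t0 IH0 t1 IH1] [|c q] //=; rewrite ?subsetT //.
- by case: c.
- by apply: setIS; case: c.
Qed.

Lemma fix_mono n (X X' : {set bv n}) : X' \subset X -> fixcoords X \subset fixcoords X'.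
Proof.
move=> hX; apply/subsetP => i; rewrite !inE => /forallP h.
apply/forallP => x; apply/implyP => hx; apply/forallP => y; apply/implyP => hy.
have hx' : x \in X by apply: (subsetP hX).
have hy' : y \in X by apply: (subsetP hX).
by move: (h x); rewrite hx' /= => /forallP /(_ y); rewrite hy'.
Qed.

Lemma codim_ge n S (P : protocol n S) p : p \in nodes P ->
  #|fixcoords (rectX P p)| <= codim P /\ #|fixcoords (rectY P p)| <= codim P.
Proof.
move=> hp; have := @leq_bigmax_seq _ (nodes P) xpredT
  (fun p => codim_node (rectX P p) (rectY P p)) p hp isT.
rewrite /codim /codim_node => h; split; apply: leq_trans h; [apply: leq_addr|apply: leq_addl].
Qed.

Theorem mainTheorem6 (n m : nat) (S : Type) (Pi : protocol n S)
    (alpha beta : R) (r Delta : nat) (E1 E2 : 'I_m -> 'I_n -> bool) :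
  (0 < beta)%R -> (beta < alpha)%R -> (alpha < 1)%R ->
  subcube_like_protocol Pi ->
  (INR (codim Pi) <= (alpha - beta) ^ 2 * INR r * INR Delta / 4)%R ->
  expander [set: 'I_m] [set: 'I_n] E1 r Delta (alpha * INR Delta)%R ->
  expander [set: 'I_m] [set: 'I_n] E2 r Delta (alpha * INR Delta)%R ->
  exists ClX ClY : seq bool -> {set 'I_m},
    (forall (p : seq bool) (b : bool), rcons p b \in nodes Pi ->
        ClX p \subset ClX (rcons p b) /\ ClY p \subset ClY (rcons p b)) /\
    (forall p, p \in nodes Pi ->
        expander_del E1 (ClX p) (nbr E1 (ClX p)) (fixcoords (rectX Pi p))
          r Delta (beta * INR Delta)%R /\
        expander_del E2 (ClY p) (nbr E2 (ClY p)) (fixcoords (rectY Pi p))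
          r Delta (beta * INR Delta)%R) /\
    (forall p, p \in nodes Pi ->
        (INR #|ClX p| <= / (alpha - beta) * (INR (codim Pi) / INR Delta))%R /\
        (INR #|ClY p| <= / (alpha - beta) * (INR (codim Pi) / INR Delta))%R).
Proof.
move=> hb hba ha1 _ hd hE1 hE2.
have hpre := @nodes_prefix n S Pi.
have hnil := nodes_nil Pi.
have [X1 X2] := cl_props hb hba ha1 hd hE1 hnil hpre
  (fun p b => fix_mono (rectX_mono Pi p b)) (fun p hp => proj1 (codim_ge hp)).
have [Y1 Y2] := cl_props hb hba ha1 hd hE2 hnil hpre
  (fun p b => fix_mono (rectY_mono Pi p b)) (fun p hp => proj2 (codim_ge hp)).
exists (fun p => clrev E1 beta (/ (alpha - beta) * (INR (codim Pi) / INR Delta))%R Delta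
   (fun p => fixcoords (rectX Pi p)) (rev p)).
exists (fun p => clrev E2 beta (/ (alpha - beta) * (INR (codim Pi) / INR Delta))%R Delta
   (fun p => fixcoords (rectY Pi p)) (rev p)).
split; [|split].
- by move=> p b _; split; [apply: X1|apply: Y1].
- by move=> p hp; split; [apply: (proj1 (X2 p hp))|apply: (proj1 (Y2 p hp))].
- by move=> p hp; split; [apply: (proj2 (X2 p hp))|apply: (proj2 (Y2 p hp))].
Qed.
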